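(* Let $\mathcal{G}_D=(\mathcal{V}_D,\mathcal{E}_D)$ be a connected finite undirected graph with $n$ nodes, $m$ edges, and a set of $n_g$ source nodes $\mathcal{V}_g\subset\mathcal{V}_D$, the remaining nodes being sinks. Let supplies $g_i>0$ ($i\in\mathcal{V}_g$, zero otherwise), demands $d_j>0$ ($j\notin\mathcal{V}_g$, zero otherwise) with $\sum_i g_i=\sum_j d_j$, and capacities $\bar{x}_{i,j}\ge0$ on edges be given. Call a set $\mathcal{S}$ of directed edges a feasible distribution configuration if each element of $\mathcal{S}$ is an orientation of an edge of $\mathcal{E}_D$, the directed graph $(\mathcal{V}_D,\mathcal{S})$ is a polyforest (its underlying undirected graph is a forest), and there exist flows $x_{i,j}>0$, $(i\to j)\in\mathcal{S}$, with $x_{i,j}\le\bar{x}_{i,j}$ and $\sum_{(k\to j)\in\mathcal{S}}x_{k,j}-\sum_{(i\to k)\in\mathcal{S}}x_{i,k}=g_k-d_k$ for every node $k$. Then the number of feasible distribution configurations is at most $\det(\mathcal{L}'(\mathcal{G}_D))$, where $\mathcal{L}'(\mathcal{G}_D)$ is a cofactor of the Laplacian matrix of $\mathcal{G}_D$ (the Laplacian with one row and the corresponding column deleted).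
   Context: A polyforest is a directed acyclic graph whose underlying undirected graph is a forest. The Laplacian of $\mathcal{G}_D$ is $D-A$ with $D$ the degree matrix and $A$ the adjacency matrix. *)

(* Defs.v *)
From HB Require Import structures.
From mathcomp Require Import all_boot all_order all_algebra.
From mathcomp Require Import boolp.
Set Implicit Arguments. Unset Strict Implicit. Unset Printing Implicit Defensive.
Import Order.TTheory GRing.Theory Num.Theory.
Local Open Scope ring_scope.

(* Nodes of G_D are 'I_n.+1.  The undirected simple graph G_D is given by a
   symmetric irreflexive relation e. *)

Definition laplacian (n : nat) (e : rel 'I_n.+1) : 'M[int]_n.+1 :=
  \matrix_(i, j) (if i == j then (#|[set k | e i k]|)%:Z else - ((e i j : nat)%:Z)).

Definition laplacian_cofactor (n : nat) (e : rel 'I_n.+1) (r : 'I_n.+1)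
  : 'M[int]_n := row' r (col' r (laplacian e)).

Definition dir_rel (T : finType) (S : {set T * T}) : rel T :=
  fun x y => (x, y) \in S.
Definition underlying_rel (T : finType) (S : {set T * T}) : rel T :=
  fun x y => ((x, y) \in S) || ((y, x) \in S).

(* (T, S) is acyclic as a directed graph: no directed cycle (loops and
   2-cycles included). *)
Definition is_dag (T : finType) (S : {set T * T}) : Prop :=
  forall p : seq T, uniq p -> (0 < size p)%N -> ~~ cycle (dir_rel S) p.

Definition is_forest (T : finType) (u : rel T) : Prop :=
  forall p : seq T, uniq p -> (2 < size p)%N -> ~~ cycle u p.

Definition polyforest (T : finType) (S : {set T * T}) : Prop :=
  is_dag S /\ is_forest (underlying_rel S).

Definition feasible_config (R : realFieldType) (n : nat) (e : rel 'I_n.+1)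
  (g d : 'I_n.+1 -> R) (xbar : 'I_n.+1 -> 'I_n.+1 -> R)
  (S : {set 'I_n.+1 * 'I_n.+1}) : Prop :=
  [/\ (forall p, p \in S -> e p.1 p.2),
      polyforest S &
      exists x : 'I_n.+1 -> 'I_n.+1 -> R,
        (forall i j, (i, j) \in S -> 0 < x i j /\ x i j <= xbar i j) /\
        (forall k, \sum_(j | (j, k) \in S) x j k - \sum_(j | (k, j) \in S) x k j
                   = g k - d k)].

Definition feasible_configs (R : realFieldType) (n : nat) (e : rel 'I_n.+1)
  (g d : 'I_n.+1 -> R) (xbar : 'I_n.+1 -> 'I_n.+1 -> R)
  : {set {set 'I_n.+1 * 'I_n.+1}} :=
  [set S | `[< feasible_config e g d xbar S >]].

(* Main.v *)
Require Import Defs.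
From HB Require Import structures.
From mathcomp Require Import all_boot all_order all_algebra.
From mathcomp Require Import boolp.
From mathcomp Require Import all_fingroup zify.
From Stdlib Require Import Lia.
Set Implicit Arguments. Unset Strict Implicit. Unset Printing Implicit Defensive.
Import Order.TTheory GRing.Theory Num.Theory.
Local Open Scope ring_scope.

Section CauchyBinet.
Variables (R : comNzRingType) (T : finType) (t0 : T) (n : nat) (b : 'I_n -> T -> R).

Definition FT := {ffun 'I_n -> T}.
Definition Xm (f : 'I_n -> T) : 'M[R]_n := \matrix_(i, j) b i (f j).

Lemma CB_step1 :
  \det (\matrix_(i, j) \sum_p b i p * b j p) =
  \sum_(f : FT) (\prod_i b i (f i)) * \det (Xm f).
Proof.
rewrite /(\det _).
transitivity (\sum_(s : 'S_n) \sum_(f : FT)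
   (-1) ^+ s * \prod_i (b i (f i) * b (s i) (f i))).
  apply: eq_bigr => s _; rewrite -big_distrr /=; congr (_ * _).
  rewrite -(bigA_distr_bigA (fun i p => b i p * b (s i) p)) /=.
  by apply: eq_bigr => i _; rewrite mxE.
rewrite exchange_big; apply: eq_bigr => f _.
rewrite -det_tr /(\det _) big_distrr /=; apply: eq_bigr => s _.
rewrite big_split /= mulrCA; congr (_ * (_ * _)).
by apply: eq_bigr => i _; rewrite !mxE.
Qed.

Lemma det_Xm_noninj (f : 'I_n -> T) : ~~ injectiveb f -> \det (Xm f) = 0.
Proof.
case/injectivePn => i1 [i2 Di12 Ef12].
rewrite -det_tr (determinant_alternate Di12) // => j.
by rewrite !mxE Ef12.
Qed.


Section Class.
Variables (S : {set T}) (HS : #|S| = n).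
Let h (j : 'I_n) : T := nth t0 (enum S) j.

Lemma size_enumS : size (enum S) = n.
Proof. by rewrite -cardE. Qed.

Lemma h_in j : h j \in S.
Proof. by rewrite -mem_enum /h mem_nth // size_enumS. Qed.

Lemma h_inj : injective h.
Proof.
move=> i j /eqP; rewrite /h nth_uniq ?size_enumS ?enum_uniq //.
by move/eqP/val_inj.
Qed.

Lemma h_surj p : p \in S -> exists j, h j = p.
Proof.
move=> pS; have lt : (index p (enum S) < n)%N by rewrite -size_enumS index_mem mem_enum.
by exists (Ordinal lt); rewrite /h nth_index // mem_enum.
Qed.

Definition gS (f : FT) : 'S_n :=
  insubd (1%g : 'S_n) [ffun i => odflt i [pick j | h j == f i]].

Lemma CB_class :
  \sum_(f : FT | [set f i | i in 'I_n] == S) (\prod_i b i (f i)) * \det (Xm f)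
  = \det (Xm h) ^+ 2.
Proof.
rewrite (reindex_onto (fun s : 'S_n => [ffun i => h (s i)]) gS).
  rewrite (eq_bigl (fun _ => true)); last first.
    move=> s /=; apply/andP; split.
      apply/eqP/setP => p; apply/imsetP/idP => [[i _ ->]|pS].
        by rewrite ffunE h_in.
      have [j hj] := h_surj pS; exists ((s^-1)%g j) => //.
      by rewrite ffunE permKV hj.
    apply/eqP/permP => i; rewrite /gS -pvalE val_insubd.
    case: ifP => [_|/negP []]; first rewrite ffunE.
      case: pickP => [j /eqP|/(_ (s i))]; first by rewrite ffunE => /h_inj.
      by rewrite ?ffunE eqxx.
    apply/injectiveP => i1 i2; rewrite !ffunE.
    case: pickP => [j1 /eqP|/(_ (s i1))]; last by rewrite ?ffunE eqxx.
    case: pickP => [j2 /eqP|/(_ (s i2))]; last by rewrite ?ffunE eqxx.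
    rewrite ?ffunE => hj2 hj1 /= E; subst j2; apply: (@perm_inj _ s).
    by apply: h_inj; rewrite -hj1 -hj2.
  have XP (s : 'S_n) : Xm [ffun i => h (s i)] = col_perm s (Xm h).
    by apply/matrixP => i j; rewrite !mxE ffunE.
  transitivity (\sum_(s : 'S_n) \det (Xm h) * ((-1) ^+ s * \prod_i Xm h i (s i))).
    apply: eq_bigr => s _; rewrite XP col_permE det_mulmx det_perm odd_permV.
    rewrite mulrCA; congr (_ * _); rewrite mulrC; congr (_ * _); apply: eq_bigr => i _.
    by rewrite ffunE mxE.
  by rewrite -big_distrr expr2.
move=> f /eqP kf.
have finj : injective f.
  have /imset_injP fi : #|[set f i | i in 'I_n]| == #|'I_n| by rewrite kf HS card_ord.
  by move=> x y; apply: fi.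
have tP i : h (odflt i [pick j | h j == f i]) = f i.
  have fiS : f i \in S by rewrite -kf; apply/imsetP; exists i.
  case: pickP => [j /eqP //|]; have [j hj] := h_surj fiS.
  by move/(_ j); rewrite hj eqxx.
have tinj : injectiveb [ffun i => odflt i [pick j | h j == f i]].
  apply/injectiveP => x y; rewrite !ffunE => E; apply: finj.
  by rewrite -tP E tP.
by apply/ffunP => i; rewrite ffunE /gS -pvalE val_insubd tinj ffunE tP.
Qed.
End Class.

Theorem CB :
  \det (\matrix_(i, j) \sum_p b i p * b j p) =
  \sum_(S : {set T} | #|S| == n) \det (Xm (fun j => nth t0 (enum S) j)) ^+ 2.
Proof.
rewrite CB_step1 (bigID (fun f : FT => injectiveb f)) /=.
rewrite [X in _ + X]big1 ?addr0; last by move=> f /det_Xm_noninj ->; rewrite mulr0.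
rewrite (partition_big (fun f : FT => [set f i | i in 'I_n]) (fun S : {set T} => #|S| == n)) /=.
  apply: eq_bigr => S /eqP HS; rewrite -CB_class //; apply: eq_bigl => f.
  case E: ([set f i | i in 'I_n] == S); rewrite ?andbF ?andbT //.
  apply/injectiveP => x y; move/eqP: E => E.
  have /imset_injP fi : #|[set f i | i in 'I_n]| == #|'I_n| by rewrite E HS card_ord.
  by apply: fi.
move=> f /injectiveP fi; rewrite card_in_imset ?card_ord // => x y _ _; exact: fi.
Qed.
End CauchyBinet.


Definition binc (R : nzRingType) n (e : rel 'I_n.+1) (u : 'I_n.+1)
  (p : 'I_n.+1 * 'I_n.+1) : R :=
  if ((p.1 < p.2)%N && e p.1 p.2) then (u == p.1)%:R - (u == p.2)%:R else 0.

Arguments binc {R n}.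

Lemma sum_ind1 (R : nzRingType) (I : finType) (u : I) (F : I -> R) :
  \sum_a (u == a)%:R * F a = F u.
Proof.
rewrite (bigD1 u) //= eqxx mul1r big1 ?addr0 // => a /negbTE.
by rewrite eq_sym => ->; rewrite mul0r.
Qed.

Section Lap.
Variables (n : nat) (e : rel 'I_n.+1) (e_sym : symmetric e) (e_irr : irreflexive e).
Let G (a c : 'I_n.+1) : int := ((a < c)%N && e a c)%:R.

Ltac bsimp := rewrite ?eqxx ?mulr1 ?mulr0 ?mul1r ?mul0r ?sub0r ?subr0 ?addr0 ?add0r ?mulrNN ?mulrN ?mulNr ?oppr0 ?opprK.

Lemma binc_sq u a c : binc e u (a, c) * binc e u (a, c) =
  (u == a)%:R * G a c + (u == c)%:R * G a c.
Proof.
rewrite /binc /G /=; case: ifP => [/andP[lt _]|_]; last by bsimp.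
have ac : a != c by rewrite neq_ltn lt.
case: (eqVneq u a) => [ua|ua]; case: (eqVneq u c) => [uc|uc]; bsimp => //.
by move: ac; rewrite -ua -uc eqxx.
Qed.

Lemma binc_mix u w a c : u != w -> binc e u (a, c) * binc e w (a, c) =
  - ((u == a)%:R * ((w == c)%:R * G a c) + (w == a)%:R * ((u == c)%:R * G a c)).
Proof.
move=> uw; rewrite /binc /G /=; case: ifP => [/andP[lt _]|_]; last by bsimp.
have ac : a != c by rewrite neq_ltn lt.
case: (eqVneq u a) => [ua|ua]; case: (eqVneq u c) => [uc|uc];
case: (eqVneq w a) => [wa|wa]; case: (eqVneq w c) => [wc|wc]; bsimp => //;
  try (by move: ac; rewrite -?ua -?uc -?wa -?wc eqxx);
  try (by move: uw; rewrite ?ua ?uc ?wa ?wc eqxx).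
  try (subst; (by rewrite eqxx in ac) || (by rewrite eqxx in uw)).
Qed.


Lemma Gsum u k : G u k + G k u = (e u k)%:R.
Proof.
rewrite /G; case: (ltngtP u k) => [lt|lt|E] /=.
- by rewrite addr0.
- by rewrite add0r e_sym.
- have uk : u = k by apply: val_inj.
  by subst; rewrite e_irr.
Qed.

Lemma lap_entry u w : \sum_p binc e u p * binc e w p = laplacian e u w.
Proof.
rewrite mxE -(pair_bigA _ (fun a c => binc e u (a,c) * binc e w (a,c))) /=.
case: eqVneq => [<-|uw].
  under eq_bigr do under eq_bigr do rewrite binc_sq.
  under eq_bigr do rewrite big_split /=.
  rewrite big_split /=.
  under eq_bigr do rewrite -big_distrr /=.
  rewrite sum_ind1 exchange_big /=.
  under [X in _ + X]eq_bigr do rewrite -big_distrr /=.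
  rewrite sum_ind1 -big_split /=.
  under eq_bigr do rewrite Gsum.
  transitivity (\sum_(k in [set k | e u k]) (1 : int)).
    by rewrite [RHS]big_mkcond; apply: eq_bigr => k _; rewrite inE; case: (e u k).
  by rewrite sumr_const -natz.
under eq_bigr do under eq_bigr do rewrite binc_mix //.
under eq_bigr do rewrite sumrN.
rewrite sumrN; congr (- _).
under eq_bigr do rewrite big_split /=.
rewrite big_split /=.
under eq_bigr do rewrite -big_distrr /=.
rewrite sum_ind1 sum_ind1.
under [X in _ + X]eq_bigr do rewrite -big_distrr /=.
rewrite sum_ind1 sum_ind1 Gsum natz //.
Qed.

End Lap.

Section LinAlg.
Variables (F : fieldType) (T : finType) (t0 : T) (n : nat) (b : 'I_n -> T -> F).

Definition indep (U : {set T}) := forall z : T -> F,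
  (forall p, p \notin U -> z p = 0) -> (forall i, \sum_p b i p * z p = 0) ->
  forall p, z p = 0.

Lemma kernel_row m k (A : 'M[F]_(m, k)) : (k < m)%N -> exists2 v : 'rV_m, v != 0 & v *m A = 0.
Proof.
move=> km; have : \rank (kermx A) != 0%N.
  rewrite mxrank_ker subn_eq0 -ltnNge; exact: leq_ltn_trans (rank_leq_col A) km.
rewrite mxrank_eq0 => nz.
case: (boolP [exists i, row i (kermx A) != 0]) => [/existsP [i ri]|/existsPn H]; last first.
  move/negP: nz; case; apply/eqP/row_matrixP => i; rewrite row0; apply/eqP.
  by have := H i; rewrite negbK.
by exists (row i (kermx A)) => //; rewrite -row_mul mulmx_ker row0.
Qed.

Lemma push k (h : 'I_k -> T) (w : 'I_k -> F) i :
  \sum_p b i p * (\sum_(j | h j == p) w j) = \sum_j b i (h j) * w j.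
Proof.
under eq_bigr do rewrite big_distrr /=.
rewrite (exchange_big_dep xpredT) //=; apply: eq_bigr => j _.
by rewrite (big_pred1 (h j)) // => p /=; rewrite eq_sym.
Qed.

Lemma push_inj k (h : 'I_k -> T) (w : 'I_k -> F) j : injective h ->
  \sum_(j' | h j' == h j) w j' = w j.
Proof. by move=> hi; apply: big_pred1 => j' /=; rewrite (inj_eq hi). Qed.

Lemma indep_card U : indep U -> (#|U| <= n)%N.
Proof.
move=> iU; rewrite leqNgt; apply/negP => lt.
pose A : 'M[F]_(#|U|, n) := \matrix_(j, i) b i (enum_val j).
have [v nz vA] := kernel_row A lt.
pose z p := \sum_(j | enum_val j == p) v 0 j.
have z0 : forall p, z p = 0.
  apply: iU => [p pU|i].
    rewrite /z big1 // => j /eqP E; move: pU; rewrite -E.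
    by rewrite (enum_valP j).
  rewrite push; transitivity ((v *m A) 0 i); last by rewrite vA mxE.
  by rewrite mxE; apply: eq_bigr => j _; rewrite mxE mulrC.
apply/negP: nz; rewrite negbK; apply/eqP/rowP => j; rewrite mxE.
by rewrite -(z0 (enum_val j)) /z push_inj //; apply: enum_val_inj.
Qed.


Hypothesis full : forall v : 'rV[F]_n, (forall p, \sum_i v 0 i * b i p = 0) -> v = 0.

Lemma extend_step U : indep U -> (#|U| < n)%N ->
  exists p, p \notin U /\ indep (p |: U).
Proof.
move=> iU lt.
pose A : 'M[F]_(n, #|U|) := \matrix_(i, j) b i (enum_val j).
have [v nz vA] := kernel_row A lt.
have vU : forall q, q \in U -> \sum_i v 0 i * b i q = 0.
  move=> q qU; rewrite -(enum_rankK_in qU qU).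
  transitivity ((v *m A) 0 (enum_rank_in qU q)); last by rewrite vA mxE.
  by rewrite mxE; apply: eq_bigr => i _; rewrite mxE.
have [p cp] : exists p, \sum_i v 0 i * b i p != 0.
  case: (boolP [exists p, \sum_i v 0 i * b i p != 0]) => [/existsP //|/existsPn H].
  by move/negP: nz; case; apply/eqP/full => p; apply/eqP; have := H p; rewrite negbK.
have pU : p \notin U by apply: contra cp => /vU ->.
exists p; split => // z zs Bz.
have zp : z p = 0.
  have : \sum_i v 0 i * (\sum_q b i q * z q) = 0.
    by rewrite big1 // => i _; rewrite Bz mulr0.
  under eq_bigr do rewrite big_distrr /=.
  rewrite exchange_big /= (bigD1 p) //= [X in _ + X]big1 ?addr0.
    under eq_bigr do rewrite mulrA.
    by rewrite -big_distrl /= => /eqP; rewrite mulf_eq0 (negbTE cp) /= => /eqP.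
  move=> q qp; case: (boolP (q \in U)) => qU.
    by under eq_bigr do rewrite mulrA; rewrite -big_distrl /= vU // mul0r.
  rewrite zs ?big1 // => [i _|]; first by rewrite mulr0 mulr0.
  by rewrite !inE negb_or qp.
apply: iU => // q qU; case: (eqVneq q p) => [->//|qp].
by apply: zs; rewrite !inE negb_or qp.
Qed.

Lemma extend U : indep U -> exists S : {set T}, [/\ U \subset S, #|S| = n & indep S].
Proof.
move=> iU; have [k Ek] : exists k, (n - #|U|)%N = k by eexists.
elim: k U iU Ek => [|k IH] U iU Ek.
  exists U; split => //; apply/eqP; rewrite eqn_leq indep_card //=.
  by rewrite -subn_eq0 Ek.
have lt : (#|U| < n)%N by rewrite -subn_gt0 Ek.
have [p [pU ipU]] := extend_step iU lt.
have Ek' : (n - #|p |: U|)%N = k by rewrite cardsU1 pU add1n subnS Ek.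
have [S [sub cS iS]] := IH _ ipU Ek'.
by exists S; split => //; apply: subset_trans sub; apply: subsetUr.
Qed.

Section Sq.
Variables (S : {set T}) (HS : #|S| = n).
Let h (j : 'I_n) : T := nth t0 (enum S) j.
Let M : 'M[F]_n := \matrix_(i, j) b i (h j).

Lemma indep_det : indep S -> \det M != 0.
Proof.
move=> iS; rewrite -det_tr; apply/negP => /det0P [v nz vM].
pose z p := \sum_(j | h j == p) v 0 j.
have z0 : forall p, z p = 0.
  apply: iS => [p pS|i].
    rewrite /z big1 // => j /eqP E; move: pS; rewrite -E.
    by rewrite (h_in t0 HS j).
  rewrite push; transitivity ((v *m M^T) 0 i); last by rewrite vM mxE.
  by rewrite mxE; apply: eq_bigr => j _; rewrite !mxE mulrC.
apply/negP: nz; rewrite negbK; apply/eqP/rowP => j; rewrite mxE.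
by rewrite -(z0 (h j)) /z push_inj //; exact: h_inj HS.
Qed.

Lemma det_indep : \det M != 0 -> indep S.
Proof.
move=> dM z zs Bz.
pose w : 'cV[F]_n := \col_j z (h j).
have zz : forall p, \sum_(j | h j == p) z (h j) = z p.
  move=> p; case: (boolP (p \in S)) => pS.
    have [j0 hj0] := h_surj t0 HS pS; rewrite -hj0 (push_inj (fun j => z (h j))) //.
    exact: h_inj HS.
  rewrite zs // big1 // => j /eqP E; move: pS; rewrite -E.
  by rewrite (h_in t0 HS j).
have Mw : M *m w = 0.
  apply/colP => i; rewrite [RHS]mxE -(Bz i) mxE.
  under [RHS]eq_bigr do rewrite -zz.
  by rewrite push; apply: eq_bigr => j _; rewrite !mxE.
have uM : M \in unitmx by rewrite unitmxE unitfE.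
have w0 : w = 0 by rewrite -(mulKmx uM w) Mw mulmx0.
move=> p; case: (boolP (p \in S)) => pS; last exact: zs.
have [j <-] := h_surj t0 HS pS.
by have := congr1 (fun W : 'cV[F]_n => W j 0) w0; rewrite !mxE.
Qed.
End Sq.

End LinAlg.

Section Full.
Variables (F : fieldType) (n : nat) (e : rel 'I_n.+1) (e_sym : symmetric e)
  (e_conn : forall x y, connect e x y) (r : 'I_n.+1).

Lemma sum_ind2 (v : 'I_n -> F) (a : 'I_n.+1) :
  \sum_i v i * (lift r i == a)%:R = \sum_(i | lift r i == a) v i.
Proof.
by rewrite [RHS]big_mkcond; apply: eq_bigr => i _; case: eqP; rewrite ?mulr1 ?mulr0.
Qed.

Lemma full_conn (v : 'rV[F]_n) :
  (forall p, \sum_i v 0 i * binc e (lift r i) p = 0) -> v = 0.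
Proof.
move=> H; pose phi u := \sum_(i | lift r i == u) v 0 i.
have Hac (a c : 'I_n.+1) : (a < c)%N -> e a c -> phi a = phi c.
  move=> lt eac; have := H (a, c); rewrite /binc /= lt eac /=.
  under eq_bigr do rewrite mulrBr.
  rewrite sumrB !sum_ind2 => /eqP; rewrite subr_eq0 => /eqP.
  done.
have He (a c : 'I_n.+1) : e a c -> phi a = phi c.
  move=> eac; case: (ltngtP a c) => [lt|lt|E]; first exact: Hac.
    by rewrite (Hac c a lt) // e_sym.
  by rewrite (val_inj E).
have cl : closed e [pred u | phi u == phi r].
  by move=> x y /He exy; rewrite !inE exy.
have phir : phi r = 0 by rewrite /phi big_pred0 // => i; rewrite eq_sym (negbTE (neq_lift _ _)).
apply/rowP => i; rewrite mxE.
have := closed_connect cl (e_conn r (lift r i)); rewrite !inE eqxx phir => /esym/eqP.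
by rewrite /phi (big_pred1 i) // => j /=; rewrite (inj_eq (@lift_inj _ r)).
Qed.
End Full.

Section Cyc.
Variables (T : finType) (adj : rel T) (adj_sym : symmetric adj) (adj_irr : irreflexive adj)
  (deg2 : forall u w, adj u w -> exists2 w', w' != w & adj u w').

Definition has_cyc := exists p : seq T, [/\ uniq p, (2 < size p)%N & path.cycle adj p].

Lemma close_cyc v u q0 w : uniq (v :: u :: q0) -> path adj v (u :: q0) ->
  w \in q0 -> adj v w -> has_cyc.
Proof.
move=> uq pq wq aw; move: uq pq; case/splitPr: wq => p1 p2 uq pq.
exists (v :: u :: rcons p1 w); split.
- by move: uq; rewrite -cat_rcons -cat_cons -cat_cons cat_uniq => /and3P[].
- by rewrite /= size_rcons.
- rewrite /= rcons_path /= -cats1 cat_path /= last_cat /= (adj_sym w v) aw !andbT.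
  by move: pq; rewrite /= cat_path /= => /and3P[-> -> /andP[-> _]].
Qed.

Lemma walk k : forall v u q0, (#|T| <= size q0 + k)%N -> uniq (v :: u :: q0) ->
  path adj v (u :: q0) -> has_cyc.
Proof.
elim: k => [|k IH] v u q0 sz uq pq.
  have avu : adj v u by case/andP: pq.
  have [w wu avw] := deg2 avu.
  case: (boolP (w \in q0)) => wq; first exact: close_cyc uq pq wq avw.
  have : uniq (w :: v :: u :: q0).
    rewrite cons_uniq uq andbT !inE (negbTE wq) (negbTE wu) orbF orbF.
    by apply: contraTneq avw => ->; rewrite adj_irr.
  move/card_uniqP => c; have := max_card (mem (w :: v :: u :: q0)).
  by rewrite c /=; move: sz; rewrite addn0 => sz; rewrite ltnNge (leq_trans sz) //= ltnW // ltnW.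
have avu : adj v u by case/andP: pq.
  have [w wu avw] := deg2 avu.
case: (boolP (w \in q0)) => wq; first exact: close_cyc uq pq wq avw.
apply: (IH w v (u :: q0)).
- by rewrite /= addSnnS.
- rewrite cons_uniq uq andbT !inE (negbTE wq) (negbTE wu) orbF orbF.
  by apply: contraTneq avw => ->; rewrite adj_irr.
- by rewrite /= adj_sym avw.
Qed.

Lemma find_cyc x y : adj x y -> has_cyc.
Proof.
move=> axy; apply: (@walk #|T| y x [::]) => //=.
- by rewrite !inE andbT; apply: contraTneq axy => ->; rewrite adj_irr.
- by rewrite adj_sym axy.
Qed.
End Cyc.

Section Config.
Variables (R : realFieldType) (n : nat) (e : rel 'I_n.+1) (e_sym : symmetric e)
  (e_irr : irreflexive e) (g d : 'I_n.+1 -> R).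
Local Notation V := 'I_n.+1.

Definition yv (C : {set V * V}) (x : V -> V -> R) (p : V * V) : R :=
  if (p.1 < p.2)%N then ((p \in C)%:R * x p.1 p.2 - ((p.2, p.1) \in C)%:R * x p.2 p.1)
  else 0.

Variables (C : {set V * V}) (x : V -> V -> R)
  (HC : forall p, p \in C -> e p.1 p.2) (Hdag : is_dag C)
  (Hx : forall i j, (i, j) \in C -> 0 < x i j)
  (Hcons : forall k, \sum_(j | (j, k) \in C) x j k - \sum_(j | (k, j) \in C) x k j
                   = g k - d k).

Lemma no2 a c : (a, c) \in C -> (c, a) \in C -> False.
Proof.
move=> ac ca; case: (eqVneq a c) => [E|ne].
  subst c; have := Hdag (p := [:: a]) erefl erefl.
  by rewrite /= /dir_rel ac.
have := Hdag (p := [:: a; c]); rewrite /= !inE ne /=.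
by rewrite /dir_rel ac ca => /(_ erefl erefl).
Qed.

Lemma y_char a c : ((a, c) \in C) =
  ((a < c)%N && (0 < yv C x (a, c))) || ((c < a)%N && (yv C x (c, a) < 0)).
Proof.
rewrite /yv /=; case: (ltngtP a c) => [lt|lt|E] /=.
- case: (boolP ((a, c) \in C)) => ac.
    case: (boolP ((c, a) \in C)) => ca; first by case: (no2 ac ca).
    by rewrite mul1r mul0r subr0 Hx.
  rewrite mul0r sub0r oppr_gt0; case: (boolP ((c, a) \in C)) => ca;
    rewrite ?mul0r ?mul1r ?ltxx ?orbF //.
  by rewrite ltNge ltW // Hx.
- case: (boolP ((a, c) \in C)) => ac.
    case: (boolP ((c, a) \in C)) => ca; first by case: (no2 ac ca).
    by rewrite mul1r mul0r sub0r oppr_lt0 Hx.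
  rewrite mul0r subr0; case: (boolP ((c, a) \in C)) => ca;
    rewrite ?mul0r ?mul1r ?ltxx ?orbF //.
  by rewrite ltNge ltW // Hx.
- have ac : a = c by apply: val_inj.
  subst c; apply/negP => /HC /=; by rewrite e_irr.
Qed.


Lemma notloop u : (u, u) \in C = false.
Proof. by apply/negP => /HC /=; rewrite e_irr. Qed.

Lemma binc_y u p : binc e u p * yv C x p = ((u == p.1)%:R - (u == p.2)%:R) * yv C x p.
Proof.
rewrite /binc; case: ifP => // /negbT; rewrite negb_and => /orP [nlt|ne].
  by rewrite /yv (negbTE nlt) !mulr0.
have pC : (p \in C) = false by apply/negP => /HC; apply/negP.
have qC : ((p.2, p.1) \in C) = false.
  by apply/negP => /HC /=; rewrite e_sym; apply/negP.
by rewrite /yv pC qC; case: ifP; rewrite ?mul0r ?subr0 ?mulr0.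
Qed.

Lemma y_diff u c : yv C x (u, c) - yv C x (c, u) =
  ((u, c) \in C)%:R * x u c - ((c, u) \in C)%:R * x c u.
Proof.
rewrite /yv /=; case: (ltngtP u c) => [lt|lt|E] /=.
- by rewrite subr0.
- by rewrite sub0r opprB.
- have uc : u = c by apply: val_inj.
  by subst c; rewrite notloop !mul0r !subr0.
Qed.

Lemma y_eq u : \sum_p binc e u p * yv C x p = d u - g u.
Proof.
rewrite (eq_bigr (fun p => ((u == p.1)%:R - (u == p.2)%:R) * yv C x (p.1, p.2))); last first.
  by case=> a c _; rewrite binc_y.
rewrite -(pair_bigA _ (fun a c => ((u == a)%:R - (u == c)%:R) * yv C x (a, c))) /=.
under eq_bigr do under eq_bigr do rewrite mulrBl.
under eq_bigr do rewrite sumrB.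
rewrite sumrB.
under eq_bigr do rewrite -big_distrr /=.
rewrite sum_ind1 exchange_big /=.
under [X in _ - X]eq_bigr do rewrite -big_distrr /=.
rewrite sum_ind1 -sumrB.
under eq_bigr do rewrite y_diff.
rewrite sumrB -[RHS]opprB -Hcons opprB; congr (_ - _).
  by rewrite [RHS]big_mkcond; apply: eq_bigr => c _; case: ((u, c) \in C); rewrite ?mul1r ?mul0r.
by rewrite [RHS]big_mkcond; apply: eq_bigr => c _; case: ((c, u) \in C); rewrite ?mul1r ?mul0r.
Qed.


Lemma sum_binc p : \sum_u binc e u p = 0 :> R.
Proof.
rewrite /binc; case: ((p.1 < p.2)%N && e p.1 p.2); last by rewrite big1.
rewrite sumrB.
have H (a : V) : \sum_u (u == a)%:R = 1 :> R.
  by rewrite (eq_bigr (fun u => (a == u)%:R * 1)) ?sum_ind1 // => u _; rewrite eq_sym mulr1.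
by rewrite !H subrr.
Qed.

Lemma y_indep (r : V) (Hfor : is_forest (underlying_rel C)) :
  indep (fun i p => binc e (lift r i) p : R) [set p | yv C x p != 0].
Proof.
move=> z zs Bz.
have zs' p : z p != 0 -> yv C x p != 0.
  by apply: contraNN => /eqP H; apply/eqP/zs; rewrite inE H eqxx.
have Ball u : \sum_p binc e u p * z p = 0.
  have tot : \sum_u \sum_p binc e u p * z p = 0.
    rewrite exchange_big big1 // => p _; rewrite -big_distrl /= sum_binc mul0r //.
  move: tot; rewrite (bigD1_ord r) //= [X in _ + X]big1 ?addr0 => [Hr|i _]; last exact: Bz.
  by case: (unliftP r u) => [i ->|->]; first by rewrite Bz.
pose adj (v w : V) := (z (v, w) != 0) || (z (w, v) != 0).
have adj_sym : symmetric adj by move=> v w; rewrite /adj orbC.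
have yvv v : yv C x (v, v) = 0 by rewrite /yv /= ltnn.
have adj_irr : irreflexive adj.
  by move=> v; rewrite /adj orbb; apply/idP => H; move: (zs' _ H); rewrite yvv eqxx.
have ysupp v w : yv C x (v, w) != 0 -> [/\ (v < w)%N, e v w & underlying_rel C v w].
  rewrite /yv /=; case: ifP => lt; last by rewrite eqxx.
  rewrite /underlying_rel; case: (boolP ((v, w) \in C)) => [vw|nvw].
    by move: (HC vw) => /= evw; rewrite evw.
  case: (boolP ((w, v) \in C)) => [wv|nwv]; last by rewrite !mul0r subrr eqxx.
  by move: (HC wv) => /= ewv; split => //; rewrite e_sym.
have adj_sub : subrel adj (underlying_rel C).
  move=> v w; rewrite /adj => /orP [/zs' /ysupp [] //|/zs' /ysupp [_ _]].
  by rewrite /underlying_rel orbC.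
have deg2 u w : adj u w -> exists2 w', w' != w & adj u w'.
  move=> auw.
  case: (boolP [exists w', (w' != w) && adj u w']) => [/existsP [w' /andP [? ?]]|/existsPn H].
    by exists w'.
  have uw : u != w by apply: contraTneq auw => ->; rewrite adj_irr.
  have Hp p : p != (u, w) -> p != (w, u) -> binc e u p * z p = 0.
    case: p => a c pa pb; rewrite /binc /=; case: ifP => _; last by rewrite mul0r.
    case: (eqVneq u a) => [ua|ua]; case: (eqVneq u c) => [uc|uc];
      rewrite ?subrr ?mul0r //.
    + subst a; have cw : c != w by apply: contra pa => /eqP ->.
      have := H c; rewrite cw /= /adj negb_or => /andP [/negPn/eqP -> _].
      by rewrite mulr0.
    + subst c; have aw : a != w by apply: contra pb => /eqP ->.
      have := H a; rewrite aw /= /adj negb_or => /andP [_ /negPn/eqP ->].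
      by rewrite mulr0.
  have := Ball u.
  rewrite (bigD1 (u, w)) //= (bigD1 (w, u)) /=; last first.
    by rewrite xpair_eqE negb_and eq_sym uw.
  rewrite big1 ?addr0; last by move=> p /andP [pa pb]; apply: Hp.
  have zz (a c : V) : ~~ (a < c)%N -> z (a, c) = 0.
    by move=> h; apply/zs; rewrite inE /yv /= (negbTE h) eqxx.
  move=> E; exfalso; move: auw; rewrite /adj.
  case: (ltngtP u w) => [lt|lt|eq].
  + have zwu : z (w, u) = 0 by apply: zz; rewrite -leqNgt ltnW.
    rewrite zwu eqxx orbF => nz; have [_ euw _] := ysupp _ _ (zs' _ nz).
    move: E; rewrite zwu /binc /= lt euw eqxx (negbTE uw) mulr0 addr0 subr0 mul1r.
    by move=> E; rewrite E eqxx in nz.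
  + have zuw : z (u, w) = 0 by apply: zz; rewrite -leqNgt ltnW.
    rewrite zuw eqxx /= => nz; have [_ ewu _] := ysupp _ _ (zs' _ nz).
    move: E; rewrite zuw /binc /= lt ewu eqxx (negbTE uw) mulr0 add0r sub0r mulN1r.
    by move=> /eqP; rewrite oppr_eq0 (negbTE nz).
  + by move: uw; rewrite (val_inj eq) eqxx.
case=> a c; apply/eqP; apply/idPn => nz.
have aac : adj a c by rewrite /adj nz.
have [q [uq sq cq]] := find_cyc adj_sym adj_irr deg2 aac.
by have := Hfor q uq sq; rewrite (sub_cycle adj_sub cq).
Qed.

End Config.

Lemma binc_intr (R : realFieldType) n (e : rel 'I_n.+1) u p :
  (binc e u p : R) = (binc e u p : int)%:~R.
Proof.
rewrite /binc; case: ifP => _; last by rewrite mulr0z.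
by rewrite intrB !natz !pmulrn.
Qed.

Lemma sq_ge1 (x : int) : x != 0 -> 1 <= x ^+ 2.
Proof. move=> H; rewrite expr2; nia. Qed.

Theorem lemma1 (R : realFieldType) (n : nat) (e : rel 'I_n.+1)
  (Vg : {set 'I_n.+1}) (g d : 'I_n.+1 -> R) (xbar : 'I_n.+1 -> 'I_n.+1 -> R)
  (e_sym : symmetric e) (e_irr : irreflexive e)
  (e_conn : forall x y, connect e x y)
  (g_pos : forall i, i \in Vg -> 0 < g i)
  (g_zero : forall i, i \notin Vg -> g i = 0)
  (d_pos : forall j, j \notin Vg -> 0 < d j)
  (d_zero : forall j, j \in Vg -> d j = 0)
  (balance : \sum_i g i = \sum_j d j)
  (xbar_ge0 : forall i j, e i j -> 0 <= xbar i j)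
  (r : 'I_n.+1) :
  (#|feasible_configs e g d xbar|)%:Z <= \det (laplacian_cofactor e r).
Proof.
pose T := ('I_n.+1 * 'I_n.+1)%type.
pose t0 : T := (r, r).
pose bI (i : 'I_n) (p : T) : int := binc e (lift r i) p.
pose bR (i : 'I_n) (p : T) : R := binc e (lift r i) p.
pose h (S : {set T}) (j : 'I_n) := nth t0 (enum S) j.
pose D (S : {set T}) := \det (Xm bI (h S)).
have Lc : laplacian_cofactor e r = \matrix_(i, j) \sum_p bI i p * bI j p.
  by apply/matrixP => i j; rewrite !mxE lap_entry // mxE.
rewrite Lc (CB t0).
pose good := [set S : {set T} | (#|S| == n) && (D S != 0)].
have step3 : (#|good|%:Z) <= \sum_(S : {set T} | #|S| == n) D S ^+ 2.
  have A : (#|good|%:Z) <= \sum_(S : {set T} | (#|S| == n) && (D S != 0)) D S ^+ 2.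
    have -> : (#|good|%:Z) = \sum_(S : {set T} | (#|S| == n) && (D S != 0)) 1.
      rewrite sumr_const -natz; congr (_%:R); apply: eq_card => S.
      by rewrite inE.
    by apply: ler_sum => S /andP [_ nz]; apply: sq_ge1.
  have B : 0 <= \sum_(S : {set T} | (#|S| == n) && ~~ (D S != 0)) D S ^+ 2.
    by apply: sumr_ge0 => S _; exact: sqr_ge0.
  by rewrite (bigID (fun S => D S != 0)) /= -[_%:Z]addr0 lerD.
apply: le_trans step3; rewrite lez_nat.
set CF := feasible_configs e g d xbar.
have cfP C : C \in CF -> feasible_config e g d xbar C by rewrite inE => /asboolP.
pose flow (C : {set T}) (x : 'I_n.+1 -> 'I_n.+1 -> R) :=
  (forall i j, (i, j) \in C -> 0 < x i j /\ x i j <= xbar i j) /\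
  (forall k, \sum_(j | (j, k) \in C) x j k - \sum_(j | (k, j) \in C) x k j = g k - d k).
pose compat (C S : {set T}) := `[< exists x : 'I_n.+1 -> 'I_n.+1 -> R, flow C x /\ [set p | yv C x p != 0] \subset S >].
have EM S : \matrix_(i, j) (binc e (lift r i) (h S j) : R) = map_mx intr (Xm bI (h S)).
  by apply/matrixP => i j; rewrite !mxE binc_intr.
have Fact1 C : C \in CF -> exists2 S, S \in good & compat C S.
  move=> /cfP [HC [Hdag Hfor] [x [Hx Hc]]].
  have iU := y_indep e_sym (x := x) HC (r := r) Hfor.
  have [S [sub cS iS]] := extend (full_conn (F := R) e_sym e_conn (r := r)) iU.
  exists S.
    rewrite inE cS eqxx /=; have := indep_det t0 cS iS.
    apply: contraNneq => D0; have D0p : \det (Xm bI (h S)) = 0 := D0.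
    by rewrite EM det_map_mx D0p rmorph0.
  by apply/asboolP; exists x.
have Fact2 S C1 C2 : S \in good -> C1 \in CF -> C2 \in CF -> compat C1 S -> compat C2 S ->
    C1 = C2.
  move=> Sg /cfP [HC1 [Hd1 _] _] /cfP [HC2 [Hd2 _] _].
  move=> /asboolP [x1 [[Hx1 Hc1] s1]] /asboolP [x2 [[Hx2 Hc2] s2]].
  move: Sg; rewrite inE => /andP [/eqP cS DS].
  have dR : \det (\matrix_(i, j) (binc e (lift r i) (h S j) : R)) != 0.
    by rewrite EM det_map_mx intr_eq0.
  have yS (C : {set T}) (x : 'I_n.+1 -> 'I_n.+1 -> R) p : [set p | yv C x p != 0] \subset S -> p \notin S -> yv C x p = 0.
    move=> sub pS; apply/eqP; apply: contraNT pS => nz.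
    by apply: (subsetP sub); rewrite inE.
  have z0 := @det_indep R T t0 n (fun i p => binc e (lift r i) p : R) S cS dR (fun p => yv C1 x1 p - yv C2 x2 p).
  have yy p : yv C1 x1 p = yv C2 x2 p.
    apply/eqP; rewrite -subr_eq0; apply/eqP; apply: z0.
      by move=> q qS; rewrite (yS C1 x1 q s1 qS) (yS C2 x2 q s2 qS) subrr.
    move=> i; under eq_bigr do rewrite mulrBr.
    by rewrite sumrB (y_eq e_sym e_irr HC1 Hc1) (y_eq e_sym e_irr HC2 Hc2) subrr.
  have Hx1' i j : (i, j) \in C1 -> 0 < x1 i j by move=> /Hx1 [].
  have Hx2' i j : (i, j) \in C2 -> 0 < x2 i j by move=> /Hx2 [].
  apply/setP => -[a c].
  by rewrite (y_char e_irr HC1 Hd1 Hx1') (y_char e_irr HC2 Hd2 Hx2') !yy.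
pose psi S := [pick C in CF | compat C S].
have sub : Some @: CF \subset psi @: good.
  apply/subsetP => oC /imsetP [C CC ->]; have [S Sg cS] := Fact1 C CC.
  apply/imsetP; exists S => //.
  rewrite /psi; case: pickP => [C' /andP [C'C cC'] | /(_ C)]; last by rewrite CC cS.
  by rewrite (Fact2 S C' C Sg C'C CC cC' cS).
rewrite -(card_imset _ (@Some_inj _)).
by rewrite (leq_trans (subset_leq_card sub)) // leq_imset_card.
Qed.
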